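(* For every abstraction $\lambda x.M \in \Lambda^\bullet$ and every $N \in \Lambda^\bullet$, we have $\operatorname{RB}((\lambda x.M)\ N) \to_\beta \operatorname{RB}(M[x:=N])$, i.e. the left-hand side reduces to the right-hand side in exactly one $\beta$-step.
   Context: $\Lambda$ is the set of untyped $\lambda$-terms (up to $\alpha$-equivalence), and $\to_\beta$ is one-step $\beta$-reduction on $\Lambda$. For each $M\in\Lambda$ there is a new formal symbol $\underline{M}$, called an atom. Atoms are constants: they have no free variables, and substitution leaves them unchanged. For $M\in\Lambda$, $M^\bullet$ is obtained from $M$ by replacing each free occurrence of each variable $x$ by the atom $\underline{x}$. Set $\Lambda^\bullet=\{M^\bullet : M\in\Lambda\}$; its elements are closed terms that may contain atoms. Substitution $P[x:=Q]$ is extended to such terms, with atoms treated as constants. For $\lambda x.M\in\Lambda^\bullet$ the body $M$ may contain $x$ free, and $M[x:=\underline{x}]\in\Lambda^\bullet$. The read-back map $\operatorname{RB}$ sends each element of $\Lambda^\bullet$ to a $\lambda$-term and is defined by: - $\operatorname{RB}(P\ Q)\equiv\operatorname{RB}(P)\ \operatorname{RB}(Q)$ for $P,Q\in\Lambda^\bullet$; - $\operatorname{RB}(\lambda x.P)\equiv\lambda x.\operatorname{RB}(P[x:=\underline{x}])$ for $\lambda x.P\in\Lambda^\bullet$; - $\operatorname{RB}(\underline{P})\equiv P$ for $P\in\Lambda$. *)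

(* Defs.v *)
From Stdlib Require Import Arith.

Inductive term : Type :=
| Var : nat -> term
| App : term -> term -> term
| Lam : term -> term.

Fixpoint lift (k c : nat) (t : term) : term :=
  match t with
  | Var i => if c <=? i then Var (i + k) else Var i
  | App t1 t2 => App (lift k c t1) (lift k c t2)
  | Lam t1 => Lam (lift k (S c) t1)
  end.

Fixpoint subst (j : nat) (u : term) (t : term) : term :=
  match t with
  | Var i => if i =? j then u else if j <? i then Var (pred i) else Var i
  | App t1 t2 => App (subst j u t1) (subst j u t2)
  | Lam t1 => Lam (subst (S j) (lift 1 0 u) t1)
  end.

Inductive beta : term -> term -> Prop :=
| beta_redex : forall t u, beta (App (Lam t) u) (subst 0 u t)
| beta_appL : forall t t' u, beta t t' -> beta (App t u) (App t' u)
| beta_appR : forall t u u', beta u u' -> beta (App t u) (App t u')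
| beta_lam : forall t t', beta t t' -> beta (Lam t) (Lam t').

(* An atom [Atom M] is a constant standing for the lambda-term M; its
   free variables are global names (top-level de Bruijn indices of M). *)
Inductive aterm : Type :=
| AVar : nat -> aterm
| AApp : aterm -> aterm -> aterm
| ALam : aterm -> aterm
| Atom : term -> aterm.

Fixpoint aclosed_at (d : nat) (t : aterm) : bool :=
  match t with
  | AVar i => i <? d
  | AApp t1 t2 => aclosed_at d t1 && aclosed_at d t2
  | ALam t1 => aclosed_at (S d) t1
  | Atom _ => true
  end.

Fixpoint alift (k c : nat) (t : aterm) : aterm :=
  match t with
  | AVar i => if c <=? i then AVar (i + k) else AVar i
  | AApp t1 t2 => AApp (alift k c t1) (alift k c t2)
  | ALam t1 => ALam (alift k (S c) t1)
  | Atom M => Atom M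
  end.

Fixpoint asubst (j : nat) (u : aterm) (t : aterm) : aterm :=
  match t with
  | AVar i => if i =? j then u else if j <? i then AVar (pred i) else AVar i
  | AApp t1 t2 => AApp (asubst j u t1) (asubst j u t2)
  | ALam t1 => ALam (asubst (S j) (alift 1 0 u) t1)
  | Atom M => Atom M
  end.

(** M^bullet : replace each free occurrence of a variable x by the atom
    [Atom (Var x)]. Under d binders, index i >= d denotes free variable i-d. *)
Fixpoint bullet_at (d : nat) (t : term) : aterm :=
  match t with
  | Var i => if d <=? i then Atom (Var (i - d)) else AVar i
  | App t1 t2 => AApp (bullet_at d t1) (bullet_at d t2)
  | Lam t1 => ALam (bullet_at (S d) t1)
  end.

Definition bullet (t : term) : aterm := bullet_at 0 t.

Definition in_Lbullet (P : aterm) : Prop := exists M : term, P = bullet M.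

(** In de Bruijn form, the clause
      RB(λx.P) = λx.RB(P[x := x_])
    (x chosen fresh, so that the binder captures exactly the atom x_
    introduced for it) amounts to keeping the binder and, for an atom
    occurring under d binders, lifting its free variables past them;
    RB(P Q) = RB(P) RB(Q) and RB(Atom M) = M. *)
Fixpoint RB_at (d : nat) (t : aterm) : term :=
  match t with
  | AVar i => Var i
  | AApp t1 t2 => App (RB_at d t1) (RB_at d t2)
  | ALam t1 => Lam (RB_at (S d) t1)
  | Atom M => lift d 0 M
  end.

Definition RB (t : aterm) : term := RB_at 0 t.

(* Main.v *)
Require Import Defs.
From Stdlib Require Import Arith Lia Bool.

Lemma bullet_closed : forall t d, aclosed_at d (bullet_at d t) = true.
Proof.
  induction t; intros d; simpl.
  - destruct (d <=? n) eqn:E; simpl; auto. apply Nat.leb_gt in E. apply Nat.ltb_lt; lia.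
  - rewrite IHt1, IHt2; auto.
  - apply IHt.
Qed.

Lemma aclosed_mono : forall t c c', c <= c' -> aclosed_at c t = true -> aclosed_at c' t = true.
Proof.
  induction t; intros c c' H; simpl; intros H1; auto.
  - apply Nat.ltb_lt in H1; apply Nat.ltb_lt; lia.
  - apply andb_true_iff in H1 as [A B]. rewrite (IHt1 c c'), (IHt2 c c'); auto.
  - apply (IHt (S c)); auto; lia.
Qed.

Lemma alift_closed : forall t k c, aclosed_at c t = true -> alift k c t = t.
Proof.
  induction t; intros k c H; simpl in *; auto.
  - apply Nat.ltb_lt in H. destruct (c <=? n) eqn:E; auto. apply Nat.leb_le in E; lia.
  - apply andb_true_iff in H as [A B]. rewrite IHt1, IHt2; auto.
  - rewrite IHt; auto.
Qed.

Lemma lift_lift : forall M k n c c', c' <= c <= c' + n ->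
  lift k c (lift n c' M) = lift (k + n) c' M.
Proof.
  induction M; intros k n0 c c' H; simpl.
  - destruct (c' <=? n) eqn:E; simpl.
    + apply Nat.leb_le in E. destruct (c <=? n + n0) eqn:F.
      * f_equal; lia.
      * apply Nat.leb_gt in F; lia.
    + apply Nat.leb_gt in E. destruct (c <=? n) eqn:F; auto. apply Nat.leb_le in F; lia.
  - rewrite IHM1, IHM2; auto.
  - rewrite IHM; auto; lia.
Qed.

Lemma subst_lift : forall M j u n c, c <= j <= c + n ->
  subst j u (lift (S n) c M) = lift n c M.
Proof.
  induction M; intros j u n0 c H; simpl.
  - destruct (c <=? n) eqn:E; simpl.
    + apply Nat.leb_le in E.
      destruct (n + S n0 =? j) eqn:F. apply Nat.eqb_eq in F; lia.
      destruct (j <? n + S n0) eqn:G. f_equal; lia. apply Nat.ltb_ge in G; lia.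
    + apply Nat.leb_gt in E.
      destruct (n =? j) eqn:F. apply Nat.eqb_eq in F; lia.
      destruct (j <? n) eqn:G; auto. apply Nat.ltb_lt in G; lia.
  - rewrite IHM1, IHM2; auto.
  - rewrite IHM; auto; lia.
Qed.

Lemma RB_shift : forall u d c, aclosed_at c u = true ->
  RB_at (d + c) u = lift d c (RB_at c u).
Proof.
  induction u; intros d c H; simpl in *.
  - apply Nat.ltb_lt in H. destruct (c <=? n) eqn:E; auto. apply Nat.leb_le in E; lia.
  - apply andb_true_iff in H as [A B]. rewrite IHu1, IHu2; auto.
  - rewrite <- IHu; auto. f_equal; f_equal; lia.
  - rewrite lift_lift; auto; lia.
Qed.

Lemma RB_S : forall u d, aclosed_at 0 u = true -> lift 1 0 (RB_at d u) = RB_at (S d) u.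
Proof.
  intros u d H.
  replace d with (d + 0) by lia. rewrite RB_shift; auto.
  replace (S (d + 0)) with (S d + 0) by lia. rewrite RB_shift; auto.
  rewrite lift_lift; auto; lia.
Qed.

Lemma main : forall t d u, aclosed_at (S d) t = true -> aclosed_at 0 u = true ->
  subst d (RB_at d u) (RB_at (S d) t) = RB_at d (asubst d u t).
Proof.
  induction t; intros d u Ht Hu; simpl in *.
  - apply Nat.ltb_lt in Ht.
    destruct (n =? d) eqn:E; auto.
    apply Nat.eqb_neq in E. destruct (d <? n) eqn:F; auto.
  - apply andb_true_iff in Ht as [A B]. rewrite IHt1, IHt2; auto.
  - rewrite RB_S by auto. rewrite (alift_closed u 1 0 Hu). rewrite IHt; auto.
  - apply subst_lift; lia.
Qed.

Theorem proposition1 :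
  forall (M N : aterm),
    in_Lbullet (ALam M) -> in_Lbullet N ->
    beta (RB (AApp (ALam M) N)) (RB (asubst 0 N M)).
Proof.
  intros M N [M0 HM] [N0 HN].
  destruct M0; unfold bullet in HM; simpl in HM; try (discriminate); try discriminate.
  injection HM as HM.
  unfold RB. simpl.
  rewrite <- main.
  - apply beta_redex.
  - subst. apply bullet_closed.
  - subst. apply bullet_closed.
Qed.
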